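(* Suppose there is $K>0$ such that $\|\nabla_{(\theta,x)}\ell(\theta,x)-\nabla_{(\theta,x)}\ell(\theta',x')\|\le K\|(\theta,x)-(\theta',x')\|$ for all $(\theta,x),(\theta',x')\in\mathbb{R}^{d_\theta}\times\mathbb{R}^{d_x}$. Fix $\eta_\theta,\gamma_\theta,\eta_x,\gamma_x>0$ and define $b:\mathbb{R}^{2d_x}\times\mathbb{R}^{2d_\theta}\times\mathcal{P}(\mathbb{R}^{2d_x})\to\mathbb{R}^{2d_\theta+2d_x}$ by $$b((x,u),(\theta,m),q)=\begin{pmatrix}\eta_\theta m\\-\gamma_\theta\eta_\theta m-\nabla_\theta\mathcal{F}(\theta,q)\\\eta_xu\\-\gamma_x\eta_xu+\nabla_x\ell(\theta,x)\end{pmatrix}.$$ Then there is a constant $K_b>0$ such that $$\|b(\Upsilon,\vartheta,q)-b(\Upsilon',\vartheta',q')\|\le K_b\big(\|\Upsilon-\Upsilon'\|+\|\vartheta-\vartheta'\|+\mathsf{W}_1(q,q')\big)$$ for all $\Upsilon,\Upsilon'\in\mathbb{R}^{2d_x}$, $\vartheta,\vartheta'\in\mathbb{R}^{2d_\theta}$ and $q,q'\in\mathcal{P}(\mathbb{R}^{2d_x})$.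
   Context: $\ell(\theta,x)=\log p_\theta(y,x)$ for a latent variable model with fixed data $y$. $\mathcal{P}(\mathbb{R}^{2d_x})$: probability measures on $\mathbb{R}^{d_x}\times\mathbb{R}^{d_x}$ with Lebesgue density and finite second moment; $\mathsf{W}_1$ is the Wasserstein-1 distance. $\nabla_\theta\mathcal{F}(\theta,q):=-\int\nabla_\theta\ell(\theta,x)\,q(\mathrm{d}x,\mathrm{d}u)$. Points are written $\Upsilon=(x,u)$ and $\vartheta=(\theta,m)$. *)

(* Defs.v *)
From HB Require Import structures.
From mathcomp Require Import all_boot all_order all_algebra.
From mathcomp Require Import all_classical all_reals all_analysis.
Set Implicit Arguments. Unset Strict Implicit. Unset Printing Implicit Defensive.
Import Order.TTheory GRing.Theory Num.Theory.
Import numFieldNormedType.Exports.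
Local Open Scope classical_set_scope.
Local Open Scope ring_scope.

(* Borel sigma-algebra on R^n = 'rV[R]_n : generated by the coordinates *)
(* (the product Borel sigma-algebra, which is the Borel sigma-algebra  *)
(* of R^n).                                                            *)
Definition rV_measure_display : measure_display -> measure_display.
Proof. exact. Qed.

Section measurable_rV.
Variables (R : realType) (n : nat).
Let coords : 'I_n -> 'rV[R]_n -> R := fun i v => v 0 i.
Let rV_set0 : g_sigma_preimage coords set0.
Proof. exact: sigma_algebra0. Qed.
Let rV_setC A : g_sigma_preimage coords A -> g_sigma_preimage coords (~` A).
Proof. exact: sigma_algebraC. Qed.
Let rV_bigcup (F : _^nat) : (forall i, g_sigma_preimage coords (F i)) ->
  g_sigma_preimage coords (\bigcup_i (F i)).
Proof. exact: sigma_algebra_bigcup. Qed.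
HB.instance Definition _ := @isMeasurable.Build
  (rV_measure_display default_measure_display)
  ('rV[R]_n) (g_sigma_preimage coords) rV_set0 rV_setC rV_bigcup.
End measurable_rV.

Section defs.
Variable R : realType.

Definition enorm (n : nat) (v : 'rV[R]_n) : R :=
  Num.sqrt (\sum_(i < n) v 0 i ^+ 2).

Definition grad (n : nat) (f : 'rV[R]_n -> R) (z : 'rV[R]_n) : 'rV[R]_n :=
  \row_i ('D_(delta_mx 0 i) f z).

(* points Upsilon = (x,u) of R^{dx} x R^{dx}, viewed in R^{2dx} *)
Definition pt (dx : nat) (Y : 'rV[R]_dx * 'rV[R]_dx) : 'rV[R]_(dx + dx) :=
  row_mx Y.1 Y.2.

(* Iterated Lebesgue integral over R^n of a function of the n coordinates
   (by Tonelli this is the integral w.r.t. Lebesgue measure on R^n for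
   nonnegative measurable integrands). *)
Fixpoint lebint (n : nat) : (('I_n -> R) -> \bar R) -> \bar R :=
  match n with
  | 0 => fun f => f (fun _ => 0)
  | n'.+1 => fun f =>
      (\int[@lebesgue_measure R]_x
         lebint (fun g : 'I_n' -> R =>
           f (fun i : 'I_n'.+1 => if unlift ord0 i is Some j then g j else x)))%E
  end.

Definition pt_of_coords (dx : nat) (g : 'I_(dx + dx) -> R)
  : 'rV[R]_dx * 'rV[R]_dx :=
  (\row_i g (lshift dx i), \row_i g (rshift dx i)).

Definition Tx (dx : nat) := ('rV[R]_dx * 'rV[R]_dx)%type.

Definition has_lebesgue_density (dx : nat) (q : probability (Tx dx) R) :=
  exists f : Tx dx -> R,
    (forall z, 0 <= f z) /\ measurable_fun setT f /\
    forall A : set (Tx dx), measurable A ->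
      q A = lebint (fun g => ((\1_A (pt_of_coords g) : R)
                                * f (pt_of_coords g))%:E).

(* P(R^{2dx}) : probability measures with Lebesgue density and
   finite second moment *)
Definition P2 (dx : nat) (q : probability (Tx dx) R) : Prop :=
  has_lebesgue_density q /\
  (\int[q]_z ((enorm (pt z)) ^+ 2)%:E < +oo)%E.

Definition coupling (dx : nat) (q q' : probability (Tx dx) R)
  (pi : probability (Tx dx * Tx dx)%type R) : Prop :=
  (forall A, measurable A -> pi (A `*` setT) = q A) /\
  (forall B, measurable B -> pi (setT `*` B) = q' B).

Definition W1 (dx : nat) (q q' : probability (Tx dx) R) : \bar R :=
  ereal_inf [set (\int[pi]_p (enorm (pt p.1 - pt p.2))%:E)%E
            | pi in [set pi | coupling q q' pi]].

(* nabla_theta F(theta, q) = - int nabla_theta l(theta, x) q(dx, du),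
   l : R^{dth + dx} -> R evaluated at (theta, x) = row_mx theta x *)
Definition gradF (dth dx : nat) (l : 'rV[R]_(dth + dx) -> R)
  (th : 'rV[R]_dth) (q : probability (Tx dx) R) : 'rV[R]_dth :=
  - \row_i Rintegral q setT
          (fun z : Tx dx => lsubmx (grad l (row_mx th z.1)) 0 i).

Definition drift (dth dx : nat) (l : 'rV[R]_(dth + dx) -> R)
  (eta_th gam_th eta_x gam_x : R)
  (Y : 'rV[R]_dx * 'rV[R]_dx) (V : 'rV[R]_dth * 'rV[R]_dth)
  (q : probability (Tx dx) R) : 'rV[R]_(dth + dth + dx + dx) :=
  row_mx (row_mx (row_mx
    (eta_th *: V.2)
    (- (gam_th * eta_th) *: V.2 - gradF l V.1 q))
    (eta_x *: Y.2))
    (- (gam_x * eta_x) *: Y.2 + rsubmx (grad l (row_mx V.1 Y.1))).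

End defs.

(* Main.v *)
Require Import Defs.
From HB Require Import structures.
From mathcomp Require Import all_boot all_order all_algebra.
From mathcomp Require Import all_classical all_reals all_analysis.
From mathcomp Require Import ring lra measurable_realfun.
Import Order.TTheory GRing.Theory Num.Theory.
Import numFieldNormedType.Exports.
Local Open Scope classical_set_scope.
Local Open Scope ring_scope.
Set Implicit Arguments. Unset Strict Implicit. Unset Printing Implicit Defensive.
Section S.
Variable R : realType.
Definition l1 (m : nat) (v : 'rV[R]_m) : R := \sum_(i < m) `|v 0 i|.

Lemma l1_ge0 m (v : 'rV[R]_m) : 0 <= l1 v.
Proof. by apply: sumr_ge0 => i _. Qed.

Lemma enorm_ge0 m (v : 'rV[R]_m) : 0 <= enorm v.
Proof. exact: sqrtr_ge0. Qed.

Lemma coord_le_enorm m (v : 'rV[R]_m) i : `|v 0 i| <= enorm v.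
Proof.
rewrite /enorm -(sqrtr_sqr (v 0 i)) ler_sqrt; last by apply: sumr_ge0 => j _; exact: sqr_ge0.
by rewrite (bigD1 i) //= lerDl; apply: sumr_ge0 => j _; exact: sqr_ge0.
Qed.

Lemma enorm_le_l1 m (v : 'rV[R]_m) : enorm v <= l1 v.
Proof.
rewrite /enorm -(ger0_norm (l1_ge0 v)) -sqrtr_sqr ler_sqrt; last exact: sqr_ge0.
rewrite expr2 {1}/l1 mulr_suml; apply: ler_sum => i _.
rewrite -(real_normK (num_real (v 0 i))) expr2 ler_wpM2l //.
by rewrite /l1 (bigD1 i) //= lerDl; apply: sumr_ge0.
Qed.

Lemma l1_le_enorm m (v : 'rV[R]_m) : l1 v <= m%:R * enorm v.
Proof.
have -> : m%:R * enorm v = \sum_(i < m) enorm v.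
  by rewrite sumr_const card_ord mulr_natl.
by apply: ler_sum => i _; exact: coord_le_enorm.
Qed.

Lemma l1_row_mx m1 m2 (a : 'rV[R]_m1) (b : 'rV[R]_m2) :
  l1 (row_mx a b) = l1 a + l1 b.
Proof.
by rewrite /l1 big_split_ord /=; congr (_ + _); apply: eq_bigr => i _;
  rewrite ?row_mxEl ?row_mxEr.
Qed.

Lemma l1D m (a b : 'rV[R]_m) : l1 (a + b) <= l1 a + l1 b.
Proof.
rewrite /l1 -big_split /=; apply: ler_sum => i _; rewrite mxE; exact: ler_normD.
Qed.

Lemma l1N m (a : 'rV[R]_m) : l1 (- a) = l1 a.
Proof. by apply: eq_bigr => i _; rewrite mxE normrN. Qed.

Lemma l1Z m c (a : 'rV[R]_m) : l1 (c *: a) = `|c| * l1 a.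
Proof. by rewrite /l1 mulr_sumr; apply: eq_bigr => i _; rewrite mxE normrM. Qed.

Lemma l1B m (a b : 'rV[R]_m) : l1 (a - b) <= l1 a + l1 b.
Proof. by rewrite -(l1N b) l1D. Qed.

Lemma row_mxB m1 m2 (a a' : 'rV[R]_m1) (b b' : 'rV[R]_m2) :
  row_mx a b - row_mx a' b' = row_mx (a - a') (b - b').
Proof. by rewrite opp_row_mx add_row_mx. Qed.

Lemma l1_lsub m1 m2 (v : 'rV[R]_(m1 + m2)) : l1 (lsubmx v) <= l1 v.
Proof. by rewrite -{2}(hsubmxK v) l1_row_mx lerDl l1_ge0. Qed.

Lemma l1_rsub m1 m2 (v : 'rV[R]_(m1 + m2)) : l1 (rsubmx v) <= l1 v.
Proof. by rewrite -{2}(hsubmxK v) l1_row_mx lerDr l1_ge0. Qed.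

Lemma l1_le_sum_coord m (v : 'rV[R]_m) i : `|v 0 i| <= l1 v.
Proof. by rewrite /l1 (bigD1 i) //= lerDl sumr_ge0. Qed.

Lemma coord_meas (m : nat) (i : 'I_m) :
  measurable_fun setT (fun v : 'rV[R]_m => v 0 i).
Proof.
move=> _ B mB; rewrite setTI.
apply: sub_sigma_algebra.
rewrite (bigD1 i) //=; left. by exists B => //; rewrite setTI.
Qed.

Lemma lip_meas m (f : 'rV[R]_m -> R) L : 0 <= L ->
  (forall u v, `|f u - f v| <= L * l1 (u - v)) -> measurable_fun setT f.
Proof.
move=> L0 Lf; apply: (measurability _ (measurable_realfun.RGenOInfty.measurableE R)) => //.
move=> /= _ [_ [a ->] <-].
rewrite setTI.
pose box := fun (pr : {ffun 'I_m -> rat} * rat) => \bigcap_(i in [set: 'I_m])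
  ((fun v : 'rV[R]_m => v 0 i) @^-1` `](ratr (pr.1 i) - ratr pr.2), (ratr (pr.1 i) + ratr pr.2)[%classic).
pose pv := fun (p : {ffun 'I_m -> rat}) => (\row_i ratr (p i) : 'rV[R]_m).
have boxl1 pr v : box pr v -> l1 (v - pv pr.1) <= m%:R * ratr pr.2.
  move=> bv; have -> : m%:R * ratr pr.2 = \sum_(i < m) (ratr pr.2 : R).
    by rewrite sumr_const card_ord mulr_natl.
  apply: ler_sum => i _; have := bv i I; rewrite /= in_itv /= => /andP[h1 h2].
  rewrite !mxE; apply/ltW; rewrite ltr_norml; apply/andP; split; lra.
rewrite (_ : _ @^-1` _ = \bigcup_(pr : {ffun 'I_m -> rat} * rat)
   (if (0 < ratr pr.2 :> R) && (a < f (pv pr.1) - L * m%:R * ratr pr.2) then box pr else set0)).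
  apply: countable_bigcupT_measurable; first exact: countableP.
  move=> pr; case: ifP => _ //; apply: fin_bigcap_measurable; first exact: finite_finset.
  move=> i _; rewrite -[X in measurable X]setTI; apply: coord_meas => //; exact: measurable_itv.
apply/seteqP; split.
- move=> v /=; rewrite in_itv /= andbT => av.
  pose e := (f v - a) / (2 * (L * m%:R) + 1).
  have Lm0 : 0 <= L * m%:R by rewrite mulr_ge0.
  have e0 : 0 < e by rewrite divr_gt0 // ?subr_gt0 //; lra.
  have [r] := rat_in_itvoo e0; rewrite in_itv /= => /andP[r0 re].
  have [g hg] : exists g : 'I_m -> rat, forall i, ratr (g i) \in `](v 0 i - ratr r), (v 0 i + ratr r)[.
    apply: (@fin_all_exists _ (fun _ => rat) (fun i (q : rat) => (ratr q : R) \in `](v 0 i - ratr r), (v 0 i + ratr r)[)) => i; apply: rat_in_itvoo; lra.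
  exists ([ffun i => g i], r) => //=.
  have hb : box ([ffun i => g i], r) v.
    move=> i _ /=; move: (hg i); rewrite !in_itv /= ffunE => /andP[h1 h2].
    apply/andP; split; lra.
  rewrite r0 /=; case: ifP => // /negbT; rewrite -leNgt => hc; exfalso.
  have := Lf v (pv [ffun i => g i]); rewrite ler_norml => /andP[_ hl].
  have := boxl1 _ _ hb => /= hl1.
  have : L * l1 (v - pv [ffun x => g x]) <= L * (m%:R * ratr r) by rewrite ler_wpM2l.
  have : e * (2 * (L * m%:R) + 1) = f v - a.
    rewrite /e mulfVK //; apply/lt0r_neq0; lra.
  move=> he h3.
  have : (2 * (L * m%:R) + 1) * ratr r < (2 * (L * m%:R) + 1) * e.
    by rewrite ltr_pM2l //; lra.
  lra.
- move=> v [pr _] /=; case: ifP => // /andP[r0 ha] hb.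
  rewrite in_itv /= andbT.
  have := Lf (pv pr.1) v; rewrite ler_norml => /andP[_ hl].
  have hl1 := boxl1 _ _ hb.
  have : l1 (pv pr.1 - v) = l1 (v - pv pr.1) by rewrite -l1N opprB.
  move=> e1; rewrite e1 in hl.
  have : L * l1 (v - pv pr.1) <= L * (m%:R * ratr pr.2) by rewrite ler_wpM2l.
  lra.
Qed.
End S.
Section marg.
Local Open Scope ereal_scope.
Context d1 d2 (T1 : measurableType d1) (T2 : measurableType d2) (R : realType).
Variables (pi : {measure set T1 -> \bar R}) (q : {measure set T2 -> \bar R}).
Variables (phi : T1 -> T2) (mphi : measurable_fun setT phi).
Hypothesis hq : forall A, measurable A -> pi (phi @^-1` A) = q A.

Lemma marg_ge0 (f : T2 -> \bar R) : measurable_fun setT f -> (forall z, 0 <= f z) ->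
  \int[q]_z f z = \int[pi]_x f (phi x).
Proof.
move=> mf f0.
have := ge0_integral_pushforward mphi pi measurableT mf (fun y _ => f0 y).
rewrite preimage_setT => <-.
apply: eq_measure_integral => A mA _ /=; rewrite /pushforward; exact/esym/hq.
Qed.

Lemma marg_int (h : T2 -> R) : q.-integrable setT (EFin \o h) ->
  pi.-integrable setT (EFin \o (h \o phi)) /\
  \int[q]_z (h z)%:E = \int[pi]_x (h (phi x))%:E.
Proof.
move=> /integrableP[mh hfin].
have mhphi : measurable_fun setT (EFin \o (h \o phi)).
  by apply/measurable_EFinP; apply: measurableT_comp => //; exact/measurable_EFinP.
have ip : pi.-integrable setT (EFin \o (h \o phi)).
  apply/integrableP; split => //.
  rewrite -(marg_ge0 (f := fun z => `|(h z)%:E|)) //.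
  exact: measurableT_comp.
split => //.
have := @integral_pushforward _ _ _ _ _ phi mphi pi setT _ mh.
rewrite preimage_setT => /(_ ip measurableT) <-.
apply: eq_measure_integral => A mA _ /=; rewrite /pushforward; exact/esym/hq.
Qed.
End marg.
Section meas2.
Variable R : realType.

Lemma enorm_comp_meas d (T : measurableType d) m (g : T -> 'rV[R]_m) :
  (forall j, measurable_fun setT (fun t => g t 0 j)) ->
  measurable_fun setT (fun t => \sum_(j < m) g t 0 j ^+ 2) /\
  measurable_fun setT (fun t => enorm (g t)).
Proof.
move=> hg.
have ms : measurable_fun setT (fun t => \sum_(j < m) g t 0 j ^+ 2).
  by apply: measurable_sum => j; apply: measurable_funX.
split => //; rewrite /enorm.
exact: (measurableT_comp (continuous_measurable_fun (@sqrt_continuous R)) ms).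
Qed.

Lemma pt_coord_meas d (T : measurableType d) dx (g : T -> Tx R dx) :
  measurable_fun setT g -> forall j, measurable_fun setT (fun t => pt (g t) 0 j).
Proof.
move=> mg j.
have -> : (fun t => pt (g t) 0 j) = fun t => match fintype.split j with
    | inl i => (g t).1 0 i | inr i => (g t).2 0 i end.
  by apply: funext => t; rewrite /pt mxE.
case: (fintype.split j) => i.
- apply: (measurableT_comp (coord_meas i)).
  exact: (measurableT_comp measurable_fst mg).
- apply: (measurableT_comp (coord_meas i)).
  exact: (measurableT_comp measurable_snd mg).
Qed.

Lemma e_meas dx : measurable_fun setT
  (fun p : Tx R dx * Tx R dx => enorm (pt p.1 - pt p.2)).
Proof.
suff hc : forall j, measurable_fun setT (fun t : Tx R dx * Tx R dx => (pt t.1 - pt t.2) 0 j).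
  exact: (enorm_comp_meas hc).2.
move=> j.
have -> : (fun t : Tx R dx * Tx R dx => (pt t.1 - pt t.2) 0 j) =
   (fun t => pt t.1 0 j) \- (fun t => pt t.2 0 j).
  by apply: funext => t /=; rewrite !mxE.
apply: measurable_funB.
- exact: (pt_coord_meas measurable_fst).
- exact: (pt_coord_meas measurable_snd).
Qed.

Lemma n_meas dx : measurable_fun setT (fun z : Tx R dx => enorm (pt z)) /\
  measurable_fun setT (fun z : Tx R dx => enorm (pt z) ^+ 2).
Proof.
have [h1 h2] := enorm_comp_meas (pt_coord_meas (@measurable_id _ (Tx R dx) setT)).
split => //.
by apply: measurable_funX.
Qed.

Lemma P2_int dx (q : probability (Tx R dx) R) (h : Tx R dx -> R) c L :
  P2 q -> 0 <= L -> measurable_fun setT h ->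
  (forall z, `|h z| <= c + L * enorm (pt z)) -> q.-integrable setT (EFin \o h).
Proof.
move=> [_ hq] L0 mh hb.
have [mn mn2] := n_meas dx.
have i2 : q.-integrable setT (fun z => (enorm (pt z) ^+ 2)%:E).
  apply/integrableP; split; first exact/measurable_EFinP.
  rewrite (eq_integral (fun z => (enorm (pt z) ^+ 2)%:E)) //.
  by move=> z _; rewrite gee0_abs // lee_fin sqr_ge0.
have ig : q.-integrable setT ((EFin \o cst (`|c| + L)%R) \+ (fun z => L%:E * (enorm (pt z) ^+ 2)%:E))%E.
  apply: integrableD => //; first exact: finite_measure_integrable_cst.
  exact: integrableZl.
apply: (le_integrable _ _ _ ig) => //; first exact/measurable_EFinP.
move=> z _.
have -> : ((EFin \o cst (`|c| + L)%R) \+ (fun z => L%:E * (enorm (pt z) ^+ 2)%:E))%E z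
   = ((`|c| + L) + L * enorm (pt z) ^+ 2)%:E by [].
rewrite /comp !abse_EFin lee_fin.
have n0 := enorm_ge0 (pt z).
apply: (le_trans (hb z)); rewrite [X in _ <= X]ger0_norm; last first.
  by apply: addr_ge0; [apply: addr_ge0|apply: mulr_ge0 => //; apply: sqr_ge0].
have : enorm (pt z) <= 1 + enorm (pt z) ^+ 2 by nra.
have : c <= `|c| by apply: ler_norm.
nra.
Qed.

End meas2.
Section wb.
Variables (R : realType) (dx : nat) (q q' : probability (Tx R dx) R)
  (pi : probability (Tx R dx * Tx R dx)%type R).

Lemma W_bound (h : Tx R dx -> R) L : 0 <= L -> coupling q q' pi ->
  q.-integrable setT (EFin \o h) -> q'.-integrable setT (EFin \o h) ->
  (forall z1 z2, `|h z1 - h z2| <= L * enorm (pt z1 - pt z2)) ->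
  (\int[pi]_p (enorm (pt p.1 - pt p.2))%:E < +oo)%E ->
  `|Rintegral q setT h - Rintegral q' setT h|
    <= L * fine (\int[pi]_p (enorm (pt p.1 - pt p.2))%:E)%E.
Proof.
move=> L0 [c1 c2] iq iq' hL efin.
have hf A : measurable A -> pi (fst @^-1` A) = q A.
  move=> mA; rewrite -c1 //; congr (pi _); apply/seteqP; split => [[x y] Ax|[x y] [Ax _]] //.
have hs A : measurable A -> pi (snd @^-1` A) = q' A.
  move=> mA; rewrite -c2 //; congr (pi _); apply/seteqP; split => [[x y] Ax|[x y] [_ Ax]] //.
have [i1 E1] := marg_int measurable_fst hf iq.
have [i2 E2] := marg_int measurable_snd hs iq'.
pose e := fun p : Tx R dx * Tx R dx => enorm (pt p.1 - pt p.2).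
have me : measurable_fun setT e by exact: e_meas.
have ie : pi.-integrable setT (EFin \o e).
  apply/integrableP; split; first exact/measurable_EFinP.
  rewrite (eq_integral (fun p => (e p)%:E)) //.
  by move=> z _; rewrite /comp gee0_abs // lee_fin enorm_ge0.
have iLe : pi.-integrable setT (EFin \o (fun p => L * e p)).
  have := integrableZl measurableT L ie.
  by apply: eq_integrable => // p _; rewrite /comp EFinM.
have mh : measurable_fun setT h by case/integrableP: iq => /measurable_EFinP.
have mg : measurable_fun setT (fun p : Tx R dx * Tx R dx => h p.1 - h p.2).
  apply: (measurable_funB (f := h \o fst) (g := h \o snd)).
  - exact: measurableT_comp mh measurable_fst.
  - exact: measurableT_comp mh measurable_snd.
have ig : pi.-integrable setT (EFin \o (fun p : Tx R dx * Tx R dx => h p.1 - h p.2)).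
  apply: (le_integrable _ _ _ iLe) => //; first exact/measurable_EFinP.
  move=> p _; rewrite /comp !abse_EFin lee_fin (ger0_norm (mulr_ge0 L0 (enorm_ge0 _))).
  exact: hL.
have iag : pi.-integrable setT (EFin \o (fun p : Tx R dx * Tx R dx => `|h p.1 - h p.2|)).
  apply: (le_integrable _ _ _ iLe) => //.
    by apply/measurable_EFinP; apply: measurableT_comp mg.
  move=> p _; rewrite /comp !abse_EFin lee_fin (ger0_norm (mulr_ge0 L0 (enorm_ge0 _))).
  by rewrite normr_id; exact: hL.
have -> : Rintegral q setT h = Rintegral pi setT (h \o fst) by rewrite /Rintegral E1.
have -> : Rintegral q' setT h = Rintegral pi setT (h \o snd) by rewrite /Rintegral E2.
rewrite -RintegralB //.
apply: le_trans (le_normr_Rintegral measurableT ig) _.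
apply: le_trans (le_Rintegral (f2 := fun p => L * e p) measurableT iag iLe _) _.
  by move=> p _; exact: hL.
by rewrite RintegralZl.
Qed.
End wb.
Section main.
Variables (R : realType) (dth dx : nat) (l : 'rV[R]_(dth + dx) -> R) (K : R).
Hypothesis K0 : 0 < K.
Hypothesis l_lip : forall z z', enorm (grad l z - grad l z') <= K * enorm (z - z').

Lemma l10 m : l1 (0 : 'rV[R]_m) = 0.
Proof. by rewrite /l1 big1 // => i _; rewrite mxE normr0. Qed.

Lemma Gcoord z z' j : `|grad l z 0 j - grad l z' 0 j| <= K * l1 (z - z').
Proof.
have := coord_le_enorm (grad l z - grad l z') j; rewrite !mxE => h.
apply: (le_trans h); apply: (le_trans (l_lip z z')).
by rewrite ler_pM2l // enorm_le_l1.
Qed.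

Lemma Gl1 z z' : l1 (grad l z - grad l z') <= (dth + dx)%:R * (K * l1 (z - z')).
Proof.
apply: (le_trans (l1_le_enorm _)); apply: ler_wpM2l => //.
apply: (le_trans (l_lip z z')).
by rewrite ler_pM2l // enorm_le_l1.
Qed.

Definition hth (th : 'rV[R]_dth) (i : 'I_dth) : Tx R dx -> R :=
  fun z => lsubmx (grad l (row_mx th z.1)) 0 i.

Lemma hth_E th i z : hth th i z = grad l (row_mx th z.1) 0 (lshift dx i).
Proof. by rewrite /hth mxE. Qed.

Lemma h_theta th th' i z : `|hth th i z - hth th' i z| <= K * l1 (th - th').
Proof.
rewrite !hth_E; apply: (le_trans (Gcoord _ _ _)).
by rewrite row_mxB l1_row_mx subrr l10 addr0.
Qed.

Lemma h_z th i z1 z2 : `|hth th i z1 - hth th i z2| <= K * l1 (z1.1 - z2.1).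
Proof.
rewrite !hth_E; apply: (le_trans (Gcoord _ _ _)).
by rewrite row_mxB l1_row_mx subrr l10 add0r.
Qed.

Lemma l1_pt1 (z1 z2 : Tx R dx) : l1 (z1.1 - z2.1) <= (dx + dx)%:R * enorm (pt z1 - pt z2).
Proof.
apply: le_trans (l1_le_enorm _).
by rewrite /pt row_mxB l1_row_mx lerDl l1_ge0.
Qed.

Lemma h_lip th i z1 z2 :
  `|hth th i z1 - hth th i z2| <= (K * (dx + dx)%:R) * enorm (pt z1 - pt z2).
Proof.
apply: (le_trans (h_z _ _ _ _)); rewrite -mulrA ler_pM2l //.
exact: l1_pt1.
Qed.

Lemma h_meas th i : measurable_fun setT (hth th i).
Proof.
have mf : measurable_fun setT (fun x : 'rV[R]_dx => grad l (row_mx th x) 0 (lshift dx i)).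
  apply: (lip_meas (L := K)); first exact: ltW.
  move=> u v; apply: (le_trans (Gcoord _ _ _)).
  by rewrite row_mxB l1_row_mx subrr l10 add0r.
have -> : hth th i = (fun x : 'rV[R]_dx => grad l (row_mx th x) 0 (lshift dx i)) \o fst.
  by apply: funext => z; rewrite hth_E.
exact: measurableT_comp mf measurable_fst.
Qed.

Lemma h_int th i (q : probability (Tx R dx) R) : P2 q ->
  q.-integrable setT (EFin \o hth th i).
Proof.
move=> hq.
have L0 : 0 <= K * (dx + dx)%:R by apply: mulr_ge0; [exact: ltW|exact: ler0n].
have hb : forall z, `|hth th i z| <= `|hth th i (0, 0)| + K * (dx + dx)%:R * enorm (pt z).
  move=> z; have := h_lip th i z (0, 0).
  have -> : pt ((0 : 'rV[R]_dx), (0 : 'rV[R]_dx)) = 0 by rewrite /pt row_mx0.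
  rewrite subr0 => h.
  have := ler_normD (hth th i z - hth th i (0, 0)) (hth th i (0, 0)).
  rewrite subrK; lra.
exact: (P2_int hq L0 (h_meas th i) hb).
Qed.

Lemma same_q_bound th th' i (q : probability (Tx R dx) R) : P2 q ->
  `|Rintegral q setT (hth th i) - Rintegral q setT (hth th' i)| <= K * l1 (th - th').
Proof.
move=> hq.
have i1 := h_int th i hq; have i2 := h_int th' i hq.
rewrite -RintegralB //.
have iB : q.-integrable setT (EFin \o (fun z => hth th i z - hth th' i z)).
  have := integrableB measurableT i1 i2.
  by apply: eq_integrable => // z _; rewrite /comp EFinB.
apply: (le_trans (le_normr_Rintegral measurableT iB)).
have ic : q.-integrable setT (EFin \o cst (K * l1 (th - th'))) by exact: finite_measure_integrable_cst.
have iaB : q.-integrable setT (EFin \o (fun z => `|hth th i z - hth th' i z|)).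
  apply: (le_integrable _ _ _ ic) => //.
    by apply/measurable_EFinP; apply: measurableT_comp; [exact: normr_measurable|apply: measurable_funB; exact: h_meas].
  move=> z _; rewrite /comp !abse_EFin lee_fin normr_id (ger0_norm (mulr_ge0 (ltW K0) (l1_ge0 _))).
  exact: h_theta.
apply: (le_trans (le_Rintegral (f2 := cst (K * l1 (th - th'))) measurableT iaB ic _)).
  by move=> z _; exact: h_theta.
rewrite Rintegral_cst //.
rewrite [fine _](_ : _ = 1) ?mulr1 //.
by rewrite [X in fine X](_ : _ = 1%E) //; exact: probability_setT.
Qed.

Lemma gradF_coord th (q : probability (Tx R dx) R) i :
  gradF l th q 0 i = - Rintegral q setT (hth th i).
Proof. by rewrite /gradF !mxE. Qed.

Lemma gradF_bound th th' (q q' : probability (Tx R dx) R)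
  (pi : probability (Tx R dx * Tx R dx)%type R) :
  P2 q -> P2 q' -> coupling q q' pi ->
  (\int[pi]_p (enorm (pt p.1 - pt p.2))%:E < +oo)%E ->
  l1 (gradF l th q - gradF l th' q') <= dth%:R * (K * l1 (th - th')
     + K * (dx + dx)%:R * fine (\int[pi]_p (enorm (pt p.1 - pt p.2))%:E)%E).
Proof.
move=> hq hq' hc hfin.
set w := fine _.
set C := (K * l1 (th - th') + K * (dx + dx)%:R * w).
have -> : dth%:R * C = \sum_(i < dth) C by rewrite sumr_const card_ord mulr_natl.
apply: ler_sum => i _.
have -> : (gradF l th q - gradF l th' q') 0 i = gradF l th q 0 i - gradF l th' q' 0 i.
  by rewrite !mxE.
rewrite !gradF_coord.
set a := Rintegral q setT (hth th i).
set b := Rintegral q' setT (hth th' i).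
set c := Rintegral q setT (hth th' i).
have h1 : `|a - c| <= K * l1 (th - th') by exact: same_q_bound.
have L0 : 0 <= K * (dx + dx)%:R by apply: mulr_ge0; [exact: ltW|exact: ler0n].
have h2 : `|c - b| <= K * (dx + dx)%:R * w.
  apply: (W_bound L0 hc (h_int th' i hq) (h_int th' i hq') _ hfin).
  exact: h_lip.
have -> : - a - - b = - ((a - c) + (c - b)) by rewrite opprK; ring.
rewrite normrN; apply: (le_trans (ler_normD _ _)).
rewrite /C; lra.
Qed.

End main.
Lemma addB4 (V : zmodType) (u u2 g g2 : V) : (u + g) - (u2 + g2) = (u - u2) + (g - g2).
Proof. by rewrite opprD addrACA. Qed.
Lemma subB4 (V : zmodType) (u u2 g g2 : V) : (u - g) - (u2 - g2) = (u - u2) - (g - g2).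
Proof. rewrite addB4; congr (_ + _); by rewrite opprB opprK addrC. Qed.

Lemma l1_rsubB (R : realType) m1 m2 (a b : 'rV[R]_(m1 + m2)) :
  l1 (rsubmx a - rsubmx b) <= l1 (a - b).
Proof.
by rewrite -{2}(hsubmxK a) -{2}(hsubmxK b) row_mxB l1_row_mx lerDr l1_ge0.
Qed.

Unset Implicit Arguments.
Set Strict Implicit.
Theorem propositionG2 (R : realType) (dth dx : nat)
  (l : 'rV[R]_(dth + dx) -> R)
  (l_diff : forall z : 'rV[R]_(dth + dx), differentiable l z)
  (K : R) (K_gt0 : 0 < K)
  (l_lip : forall z z' : 'rV[R]_(dth + dx),
      enorm (grad l z - grad l z') <= K * enorm (z - z'))
  (eta_th gam_th eta_x gam_x : R)
  (eta_th_gt0 : 0 < eta_th) (gam_th_gt0 : 0 < gam_th)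
  (eta_x_gt0 : 0 < eta_x) (gam_x_gt0 : 0 < gam_x) :
  exists Kb : R, 0 < Kb /\
    forall (Y Y' : 'rV[R]_dx * 'rV[R]_dx) (V V' : 'rV[R]_dth * 'rV[R]_dth)
           (q q' : probability (Tx R dx) R),
      P2 q -> P2 q' ->
      ((enorm (drift l eta_th gam_th eta_x gam_x Y V q
               - drift l eta_th gam_th eta_x gam_x Y' V' q'))%:E
       <= Kb%:E * ((enorm (pt Y - pt Y') + enorm (pt V - pt V'))%:E
                   + W1 q q'))%E.
Proof.
pose M : R := (dth + dth + dx + dx)%:R.
pose cth := gam_th * eta_th.
pose cx := gam_x * eta_x.
pose n : R := (dth + dx)%:R.
have cth0 : 0 < cth by apply: mulr_gt0.
have cx0 : 0 < cx by apply: mulr_gt0.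
have M0 : 0 <= M by exact: ler0n.
have n0 : 0 <= n by exact: ler0n.
have dth0 : 0 <= (dth%:R : R) by exact: ler0n.
have dxx0 : 0 <= ((dx + dx)%:R : R) by exact: ler0n.
pose Kb := (eta_th + cth + eta_x + cx + (dth%:R + 2 * n) * K) * M
           + dth%:R * K * (dx + dx)%:R + 1.
have Kb0 : 0 < Kb.
  have : 0 <= (eta_th + cth + eta_x + cx + (dth%:R + 2 * n) * K) * M.
    by apply: mulr_ge0 => //; apply: addr_ge0; [lra|apply: mulr_ge0; lra].
  have : 0 <= dth%:R * K * (dx + dx)%:R.
    by apply: mulr_ge0 => //; apply: mulr_ge0 => //; lra.
  rewrite /Kb; lra.
exists Kb; split => //.
move=> Y Y' V V' q q' hq hq'.
set A := enorm (pt Y - pt Y').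
set B := enorm (pt V - pt V').
set x := enorm (_ - _).
have A0 : 0 <= A by exact: enorm_ge0.
have B0 : 0 <= B by exact: enorm_ge0.
have key : forall pi : probability (Tx R dx * Tx R dx)%type R, coupling q q' pi ->
    (\int[pi]_p (enorm (pt p.1 - pt p.2))%:E < +oo)%E ->
    x <= Kb * (A + B + fine (\int[pi]_p (enorm (pt p.1 - pt p.2))%:E)%E).
  move=> pi hc hfin.
  set w := fine _.
  have w0 : 0 <= w by apply: fine_ge0; apply: integral_ge0 => z _; rewrite lee_fin enorm_ge0.
  set S := A + B + w.
  set a1 := l1 (V.1 - V'.1); set a2 := l1 (V.2 - V'.2).
  set b1 := l1 (Y.1 - Y'.1); set b2 := l1 (Y.2 - Y'.2).
  have a10 : 0 <= a1 by exact: l1_ge0.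
  have a20 : 0 <= a2 by exact: l1_ge0.
  have b10 : 0 <= b1 by exact: l1_ge0.
  have b20 : 0 <= b2 by exact: l1_ge0.
  have ha : a1 + a2 <= M * S.
    have : a1 + a2 <= (dth + dth)%:R * B.
      by rewrite /a1 /a2 -l1_row_mx -row_mxB; exact: l1_le_enorm.
    have : (dth + dth)%:R * B <= M * S.
      apply: ler_pM; [exact: ler0n|lra|by rewrite /M ler_nat -addnA leq_addr|rewrite /S; lra].
    lra.
  have hb : b1 + b2 <= M * S.
    have : b1 + b2 <= (dx + dx)%:R * A.
      by rewrite /b1 /b2 -l1_row_mx -row_mxB; exact: l1_le_enorm.
    have : (dx + dx)%:R * A <= M * S.
      apply: ler_pM; [exact: ler0n|lra|by rewrite /M ler_nat -addnA leq_addl|rewrite /S; lra].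
    lra.
  have hw : w <= S by rewrite /S; lra.
  have hx : x <= eta_th * a2 + (cth * a2 + dth%:R * (K * a1 + K * (dx + dx)%:R * w))
      + eta_x * b2 + (cx * b2 + n * (K * (a1 + b1))).
    apply: (le_trans (enorm_le_l1 _)).
    rewrite /drift !row_mxB !l1_row_mx.
    apply: lerD; first apply: lerD; first apply: lerD.
    - by rewrite -scalerBr l1Z ger0_norm // ltW.
    - rewrite subB4; apply: (le_trans (l1B _ _)); apply: lerD.
        by rewrite -scalerBr l1Z normrN ger0_norm // ltW.
      exact: (gradF_bound K_gt0 l_lip).
    - by rewrite -scalerBr l1Z ger0_norm // ltW.
    - rewrite addB4; apply: (le_trans (l1D _ _)); apply: lerD.
        by rewrite -scalerBr l1Z normrN ger0_norm // ltW.
      apply: (le_trans (l1_rsubB _ _)); apply: (le_trans (Gl1 K_gt0 l_lip _ _)).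
      by rewrite row_mxB l1_row_mx.
  have t1 : eta_th * a2 <= eta_th * (M * S) by apply: ler_wpM2l; lra.
  have t2 : cth * a2 <= cth * (M * S) by apply: ler_wpM2l; lra.
  have t3 : dth%:R * K * a1 <= dth%:R * K * (M * S).
    by apply: ler_wpM2l; [apply: mulr_ge0; lra|lra].
  have t4 : dth%:R * K * (dx + dx)%:R * w <= dth%:R * K * (dx + dx)%:R * S.
    by apply: ler_wpM2l => //; apply: mulr_ge0 => //; apply: mulr_ge0; lra.
  have t5 : eta_x * b2 <= eta_x * (M * S) by apply: ler_wpM2l; lra.
  have t6 : cx * b2 <= cx * (M * S) by apply: ler_wpM2l; lra.
  have t7 : n * K * (a1 + b1) <= n * K * (2 * (M * S)).
    by apply: ler_wpM2l; [apply: mulr_ge0; lra|lra].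
  have S0 : 0 <= S by rewrite /S; lra.
  have -> : Kb * S = eta_th * (M * S) + cth * (M * S) + eta_x * (M * S) + cx * (M * S)
     + dth%:R * K * (M * S) + n * K * (2 * (M * S)) + dth%:R * K * (dx + dx)%:R * S + S.
    by rewrite /Kb; ring.
  lra.
have W0 : (0 <= W1 q q')%E.
  apply: le_ereal_inf_tmp => y [pi hpi <-].
  by apply: integral_ge0 => z _; rewrite lee_fin enorm_ge0.
have [Winf|Wfin] := eqVneq (W1 q q') +oo%E.
  by rewrite Winf addey // mulry gtr0_sg // mul1e leey.
have Wr : W1 q q' = (fine (W1 q q'))%:E.
  by rewrite fineK // ge0_fin_numE // ltey.
rewrite Wr -EFinD -EFinM lee_fin.
apply/ler_addgt0Pr => eps eps0.
have : (W1 q q' < (fine (W1 q q') + eps / Kb)%:E)%E.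
  by rewrite [X in (X < _)%E]Wr lte_fin ltrDl divr_gt0.
move=> /ereal_inf_lt [y [pi hpi <-] hy].
have yfin : (\int[pi]_p (enorm (pt p.1 - pt p.2))%:E < +oo)%E.
  exact: (lt_le_trans hy (leey _)).
have hk := key pi hpi yfin.
have y0 : (0 <= \int[pi]_p (enorm (pt p.1 - pt p.2))%:E)%E.
  by apply: integral_ge0 => z _; rewrite lee_fin enorm_ge0.
have hy' : fine (\int[pi]_p (enorm (pt p.1 - pt p.2))%:E)%E < fine (W1 q q') + eps / Kb.
  move: hy; rewrite -[X in (X < _)%E]fineK ?ge0_fin_numE // lte_fin.
apply: (le_trans hk).
have : Kb * (A + B + fine (\int[pi]_p (enorm (pt p.1 - pt p.2))%:E)%E)
   <= Kb * (A + B + (fine (W1 q q') + eps / Kb)).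
  by apply: ler_wpM2l; [exact: ltW|lra].
have -> : Kb * (A + B + (fine (W1 q q') + eps / Kb)) = Kb * (A + B + fine (W1 q q')) + eps.
  rewrite !mulrDr mulrCA divff ?mulr1 ?addrA //; exact: lt0r_neq0.
done.
Qed.
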